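(* A quadruple of points of the quaternionic projective line $\mathbb{P}^1(\mathbb{H})$ is semi-stable if and only if no point is repeated more than twice.
   Context: $\mathbb{H}$ denotes Hamilton's quaternions (generators $i,j,k$), $\mathbb{P}^1(\mathbb{H})$ the set of rank-one right $\mathbb{H}$-submodules of $\mathbb{H}^2$. Let $\tau(x_1,x_2,x_3,x_4)=(-\bar x_2,\bar x_1,-\bar x_4,\bar x_3)$ on $\mathbb{C}^4$. Points of $\mathbb{P}^1(\mathbb{H})$ are identified with complex planes of $\mathbb{C}^4$ of the form $\langle x,\tau(x)\rangle$, $x\ne0$, the plane $\langle x,\tau(x)\rangle$ corresponding to the right $\mathbb{H}$-module generated by $(x_1+jx_2,\,x_3+jx_4)$. A quadruple of points of $\mathbb{P}^1(\mathbb{H})$ is semi-stable if the corresponding quadruple of complex planes is semi-stable for the diagonal action of $\mathrm{SL}_4(\mathbb{C})$ on $\mathrm{Gr}(2,4)^4$ with the Plücker linearization, i.e. some $\mathrm{SL}_4(\mathbb{C})$-invariant section of a positive power of $\bigotimes_i\mathrm{pr}_i^*\mathcal{O}(1)$ does not vanish. *)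

(* Defs.v *)
From HB Require Import structures.
From mathcomp Require Import all_boot all_order all_algebra.
From mathcomp Require Import mpoly.
From mathcomp Require Import complex.
From mathcomp Require Import Rstruct.


Set Implicit Arguments.
Unset Strict Implicit.
Unset Printing Implicit Defensive.

Import Order.TTheory GRing.Theory Num.Theory.
Local Open Scope ring_scope.

Definition CC : Type := complex Rdefinitions.R.

Definition tau (x : 'rV[CC]_4) : 'rV[CC]_4 :=
  \row_(j < 4)
    (if (j : nat) == 0%N then - (x 0 (inord 1))^*
     else if (j : nat) == 1%N then (x 0 (inord 0))^*
     else if (j : nat) == 2%N then - (x 0 (inord 3))^*
     else (x 0 (inord 2))^*).

(* The complex plane <x, tau x> of C^4, as the row space of a 2x4 matrix.
   A point of P^1(H) represented by the nonzero x in C^4 is this plane. *)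
Definition hplane (x : 'rV[CC]_4) : 'M[CC]_(2, 4) := col_mx x (tau x).

Definition plpair (k : 'I_6) : nat * nat :=
  match (k : nat) with
  | 0 => (0, 1) | 1 => (0, 2) | 2 => (0, 3)
  | 3 => (1, 2) | 4 => (1, 3) | _ => (2, 3)
  end%N.

Definition plucker (M : 'M[CC]_(2, 4)) (k : 'I_6) : CC :=
  let a : 'I_4 := inord (plpair k).1 in
  let b : 'I_4 := inord (plpair k).2 in
  M 0 a * M 1 b - M 0 b * M 1 a.

Definition plucker4 (Ms : 'I_4 -> 'M[CC]_(2, 4)) : 'I_24 -> CC :=
  fun j => plucker (Ms (inord (j %/ 6)%N)) (inord (j %% 6)%N).

(* F is multihomogeneous of multidegree (m,m,m,m) in the four blocks of
   Plücker variables: it represents a section of (⊗_i pr_i^* O(1))^{⊗ m}. *)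
Definition multihom (m : nat) (F : {mpoly CC[24]}) : Prop :=
  forall mo, mo \in msupp F ->
    forall i : 'I_4, (\sum_(j < 24 | (j %/ 6)%N == i) mo j)%N = m.

Definition sl4_invariant (F : {mpoly CC[24]}) : Prop :=
  forall (g : 'M[CC]_4), \det g = 1 ->
  forall Ms : 'I_4 -> 'M[CC]_(2, 4), (forall i, \rank (Ms i) = 2%N) ->
    F.@[plucker4 (fun i => Ms i *m g)] = F.@[plucker4 Ms].

Definition semistable_planes (Ms : 'I_4 -> 'M[CC]_(2, 4)) : Prop :=
  exists (m : nat) (F : {mpoly CC[24]}),
    (0 < m)%N /\ multihom m F /\ sl4_invariant F /\ F.@[plucker4 Ms] != 0.

Definition semistable_P1H (xs : 'I_4 -> 'rV[CC]_4) : Prop :=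
  semistable_planes (fun i => hplane (xs i)).

Definition multiplicity (xs : 'I_4 -> 'rV[CC]_4) (i : 'I_4) : nat :=
  #|[set j : 'I_4 | (hplane (xs j) == hplane (xs i))%MS]|.

(* Main.v *)
Require Import Defs.
From HB Require Import structures.
From mathcomp Require Import all_boot all_order all_algebra.
From mathcomp Require Import mpoly complex Rstruct.
From mathcomp Require Import ring zify.
Import Order.TTheory GRing.Theory Num.Theory.

Local Open Scope ring_scope.

Lemma ord4P (P : 'I_4 -> Prop) :
  P (inord 0) -> P (inord 1) -> P (inord 2) -> P (inord 3) -> forall j, P j.
Proof.
move=> H0 H1 H2 H3 j.
have -> : j = inord j by rewrite inord_val.
by case: j => [[|[|[|[|j]]]] Hj] //.
Qed.

Lemma tau_entry (x : 'rV[CC]_4) :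
  [/\ tau x 0 (inord 0) = - (x 0 (inord 1))^*, tau x 0 (inord 1) = (x 0 (inord 0))^*,
      tau x 0 (inord 2) = - (x 0 (inord 3))^* & tau x 0 (inord 3) = (x 0 (inord 2))^*].
Proof. by rewrite !mxE !inordK. Qed.

Lemma tauD (x y : 'rV[CC]_4) : tau (x + y) = tau x + tau y.
Proof.
apply/rowP; apply: ord4P; rewrite !mxE !inordK //= ?rmorphD ?rmorphN //; ring.
Qed.

Lemma tauZ (a : CC) (x : 'rV[CC]_4) : tau (a *: x) = a^* *: tau x.
Proof.
apply/rowP; apply: ord4P; rewrite !mxE !inordK //= ?rmorphM ?rmorphN //; ring.
Qed.

Lemma tauK (x : 'rV[CC]_4) : tau (tau x) = - x.
Proof.
apply/rowP; apply: ord4P; rewrite !mxE !inordK //= ?rmorphN /= ?conjCK //.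
Qed.

Lemma hplane0 (x : 'rV[CC]_4) j : hplane x 0 j = x 0 j.
Proof.
have -> : (0 : 'I_2) = lshift 1 (0 : 'I_1) by apply/val_inj.
exact: col_mxEu.
Qed.

Lemma hplane1 (x : 'rV[CC]_4) j : hplane x 1 j = tau x 0 j.
Proof.
have -> : (1 : 'I_2) = rshift 1 (0 : 'I_1) by apply/val_inj.
exact: col_mxEd.
Qed.

Lemma mul_hplane (v : 'rV[CC]_2) (x : 'rV[CC]_4) :
  v *m hplane x = v 0 0 *: x + v 0 1 *: tau x.
Proof.
apply/rowP => j; rewrite !mxE big_ord_recl big_ord1.
have -> : lift ord0 ord0 = 1 :> 'I_2 by apply/val_inj.
have -> : ord0 = 0 :> 'I_2 by apply/val_inj.
by rewrite hplane0 hplane1 [tau x 0 j]mxE.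
Qed.

Definition nrm (x : 'rV[CC]_4) : CC :=
  x 0 (inord 0) * (x 0 (inord 0))^* + x 0 (inord 1) * (x 0 (inord 1))^* +
  x 0 (inord 2) * (x 0 (inord 2))^* + x 0 (inord 3) * (x 0 (inord 3))^*.

Lemma nrm_neq0 x : x != 0 -> nrm x != 0.
Proof.
move=> nx; apply/negP => /eqP N0; move/negP: nx; apply; apply/eqP.
move/eqP: N0; rewrite /nrm.
rewrite !paddr_eq0 ?addr_ge0 ?mul_conjC_ge0 // => /andP[/andP[/andP[]]].
rewrite !mul_conjC_eq0 => /eqP h0 /eqP h1 /eqP h2 /eqP h3.
by apply/rowP; apply: ord4P; rewrite mxE.
Qed.

Lemma ord2P (P : 'I_2 -> Prop) : P 0 -> P 1 -> forall j, P j.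
Proof.
move=> H0 H1 j.
case: j => [[|[|j]] Hj] //.
- by have -> : Ordinal Hj = 0 by apply/val_inj.
- by have -> : Ordinal Hj = 1 by apply/val_inj.
Qed.

Lemma hplane_indep (a b : CC) x : x != 0 -> a *: x + b *: tau x = 0 -> a = 0 /\ b = 0.
Proof.
move=> nx E.
have e k : a * x 0 (inord k) + b * tau x 0 (inord k) = 0.
  by move: (congr1 (fun z : 'rV[CC]_4 => z 0 (inord k)) E); rewrite !mxE.
have := e 0%N; have := e 1%N; have := e 2%N; have := e 3%N.
case: (tau_entry x) => -> -> -> -> E3 E2 E1 E0.
have Nn := @nrm_neq0 x nx.
have Ha : a * nrm x = 0.
  transitivity ((x 0 (inord 0))^* * (a * x 0 (inord 0) + b * - (x 0 (inord 1))^*) +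
    (x 0 (inord 1))^* * (a * x 0 (inord 1) + b * (x 0 (inord 0))^*) +
    (x 0 (inord 2))^* * (a * x 0 (inord 2) + b * - (x 0 (inord 3))^*) +
    (x 0 (inord 3))^* * (a * x 0 (inord 3) + b * (x 0 (inord 2))^*)).
    rewrite /nrm; ring.
  by rewrite E0 E1 E2 E3; ring.
have Hb : b * nrm x = 0.
  transitivity (- (x 0 (inord 1)) * (a * x 0 (inord 0) + b * - (x 0 (inord 1))^*) +
    (x 0 (inord 0)) * (a * x 0 (inord 1) + b * (x 0 (inord 0))^*) -
    (x 0 (inord 3)) * (a * x 0 (inord 2) + b * - (x 0 (inord 3))^*) +
    (x 0 (inord 2)) * (a * x 0 (inord 3) + b * (x 0 (inord 2))^*)).
    rewrite /nrm; ring.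
  by rewrite E0 E1 E2 E3; ring.
by split; apply/eqP; [move/eqP: Ha | move/eqP: Hb]; rewrite mulf_eq0 (negPf Nn) orbF.
Qed.

Lemma hplane_free x : x != 0 -> row_free (hplane x).
Proof.
move=> nx; rewrite -kermx_eq0; apply/negPn/negP => nz.
set v := nz_row (kermx (hplane x)).
have : v != 0 by rewrite nz_row_eq0.
have /sub_kermxP : (v <= kermx (hplane x))%MS by exact: nz_row_sub.
rewrite mul_hplane => /(hplane_indep (v 0 0) (v 0 1) x nx) [a0 b0].
case/negP; apply/eqP/rowP; apply: ord2P; rewrite mxE //.
Qed.

Lemma rank_hplane x : x != 0 -> \rank (hplane x) = 2%N.
Proof. by move/hplane_free => /eqP. Qed.

Definition r2 (a b : CC) : 'rV[CC]_2 := \row_(j < 2) (if (j : nat) == 0%N then a else b).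

Lemma lin_sub (a b : CC) (x : 'rV[CC]_4) : ((a *: x + b *: tau x)%R <= hplane x)%MS.
Proof.
by apply/submxP; exists (r2 a b); rewrite mul_hplane !mxE.
Qed.

Lemma tau_sub (z x : 'rV[CC]_4) : (z <= hplane x)%MS -> (tau z <= hplane x)%MS.
Proof.
case/submxP => D ->; rewrite mul_hplane tauD !tauZ tauK.
rewrite addrC scalerN -scaleNr; exact: lin_sub.
Qed.

Lemma hplane_sub (z x : 'rV[CC]_4) : (z <= hplane x)%MS -> (hplane z <= hplane x)%MS.
Proof.
move=> zx; move: (col_mx_sub z (tau z) (hplane x)); rewrite zx tau_sub // => H; exact: H.
Qed.

Lemma det_hplane_eq0 (x y : 'rV[CC]_4) : x != 0 -> y != 0 ->
  \det (col_mx (hplane x) (hplane y) : 'M_4) = 0 -> (hplane x == hplane y)%MS.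
Proof.
move=> nx ny d0.
have : ~~ row_free (col_mx (hplane x) (hplane y) : 'M_4).
  by rewrite row_free_unit unitmxE unitfE d0 eqxx.
rewrite -kermx_eq0 => nz.
set v := nz_row (kermx (col_mx (hplane x) (hplane y) : 'M_4)).
have : v != 0 by rewrite nz_row_eq0.
have /sub_kermxP vK : (v <= kermx (col_mx (hplane x) (hplane y) : 'M_4))%MS by exact: nz_row_sub.
move=> nv.
pose v1 := @lsubmx _ 1 2 2 v; pose v2 := @rsubmx _ 1 2 2 v.
have E : v1 *m hplane x + v2 *m hplane y = 0.
  by rewrite -mul_row_col /v1 /v2 hsubmxK; exact: vK.
have fx := hplane_free x nx; have fy := hplane_free y ny.
have [z0|nz0] := eqVneq (v1 *m hplane x) 0.
  move: E; rewrite z0 add0r => /eqP; rewrite mulmx_free_eq0 // => /eqP v20.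
  move/eqP: z0; rewrite mulmx_free_eq0 // => /eqP v10.
  by move: nv; rewrite -[v](@hsubmxK _ 1 2 2) -/v1 -/v2 v10 v20 row_mx0 eqxx.
set z := v1 *m hplane x in nz0 E.
have zx : (z <= hplane x)%MS by exact: submxMl.
have zy : (z <= hplane y)%MS.
  have -> : z = (- v2) *m hplane y by rewrite mulNmx; apply/eqP; rewrite -subr_eq0 opprK E.
  exact: submxMl.
have Zx := hplane_sub z x zx; have Zy := hplane_sub z y zy.
have eZx : (hplane z == hplane x)%MS by rewrite -(mxrank_leqif_eq Zx).2 !rank_hplane.
have eZy : (hplane z == hplane y)%MS by rewrite -(mxrank_leqif_eq Zy).2 !rank_hplane.
apply/eqmxP; apply: eqmx_trans (eqmx_sym (eqmxP eZx)) (eqmxP eZy).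
Qed.

Lemma det4_gen (R : comRingType) (m n : nat -> nat -> R) :
  let P i j := m 0%N i * m 1%N j - m 0%N j * m 1%N i in
  let Q i j := n 0%N i * n 1%N j - n 0%N j * n 1%N i in
  \det (\matrix_(i < 4, j < 4) (if (i < 2)%N then m i j else n (i - 2)%N j)) =
  P 0%N 1%N * Q 2%N 3%N - P 0%N 2%N * Q 1%N 3%N + P 0%N 3%N * Q 1%N 2%N
  + P 1%N 2%N * Q 0%N 3%N - P 1%N 3%N * Q 0%N 2%N + P 2%N 3%N * Q 0%N 1%N.
Proof.
move=> P Q.
rewrite (expand_det_row _ ord0) !big_ord_recl big_ord0 /cofactor.
rewrite !(expand_det_row _ ord0) !big_ord_recl !big_ord0 /cofactor.
rewrite !(expand_det_row _ ord0) !big_ord_recl !big_ord0 /cofactor.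
rewrite !det_mx11 !mxE /bump /= /P /Q.
ring.
Qed.

Definition pairing (p q : 'I_6 -> CC) : CC :=
  p (inord 0) * q (inord 5) - p (inord 1) * q (inord 4) + p (inord 2) * q (inord 3)
  + p (inord 3) * q (inord 2) - p (inord 4) * q (inord 1) + p (inord 5) * q (inord 0).

Lemma col_mx_gen (M N : 'M[CC]_(2,4)) :
  (col_mx M N : 'M_4) = \matrix_(i < 4, j < 4)
     (if (i < 2)%N then M (inord i) (inord j) else N (inord (i - 2)) (inord j)).
Proof.
apply/matrixP => i j; rewrite mxE inord_val.
case: ifP => i2.
  have -> : i = lshift 2 (inord i : 'I_2) by apply/val_inj; rewrite /= !inordK.
  by rewrite [in RHS]/= inordK // (@col_mxEu _ 2 2 4).
have -> : i = rshift 2 (inord (i - 2) : 'I_2).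
  apply/val_inj; rewrite /= inordK; first by rewrite subnKC // leqNgt i2.
  by case: i i2 => [[|[|[|[|i]]]] Hi].
rewrite [in RHS]/= addKn inord_val; exact: (@col_mxEd _ 2 2 4).
Qed.

Lemma det_pairing (M N : 'M[CC]_(2,4)) :
  \det (col_mx M N : 'M_4) = pairing (plucker M) (plucker N).
Proof.
rewrite col_mx_gen.
rewrite (det4_gen _ (fun i j => M (inord i) (inord j)) (fun i j => N (inord i) (inord j))).
rewrite /pairing /plucker /plpair !inordK //.
cbv beta iota delta [fst snd].
have e0 : (inord 0 : 'I_2) = 0 by apply/val_inj; rewrite /= inordK.
have e1 : (inord 1 : 'I_2) = 1 by apply/val_inj; rewrite /= inordK.
rewrite e0 e1.
ring.
Qed.

Definition bd (mo : 'X_{1..24}) (i : 'I_4) : nat :=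
  (\sum_(j < 24 | (j %/ 6)%N == i) mo j)%N.

Definition bhom (d : 'I_4 -> nat) (p : {mpoly CC[24]}) : Prop :=
  forall mo, mo \in msupp p -> forall i, bd mo i = d i.

Lemma bhom_add d p q : bhom d p -> bhom d q -> bhom d (p + q).
Proof.
move=> hp hq mo /msuppD_le; rewrite mem_cat => /orP[]; [exact: hp | exact: hq].
Qed.

Lemma bhom_sub d p q : bhom d p -> bhom d q -> bhom d (p - q).
Proof.
move=> hp hq mo /msuppB_le; rewrite mem_cat => /orP[]; [exact: hp | exact: hq].
Qed.

Lemma bdD m1 m2 i : bd (m1 + m2)%MM i = (bd m1 i + bd m2 i)%N.
Proof. by rewrite /bd -big_split; apply: eq_bigr => j _; rewrite mnmDE. Qed.

Lemma bhom_mul d1 d2 p q : bhom d1 p -> bhom d2 q ->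
  bhom (fun i => d1 i + d2 i)%N (p * q).
Proof.
move=> hp hq mo /msuppM_le /allpairsP [[m1 m2] /= [h1 h2 ->]] i.
by rewrite bdD (hp _ h1) (hq _ h2).
Qed.

Lemma bdU (u : 'I_24) i : bd U_(u)%MM i = ((u %/ 6)%N == i : nat).
Proof.
rewrite /bd; have [h|h] := eqVneq ((u %/ 6)%N) (i : nat).
  rewrite (bigD1 u) ?h //= mnm1E eqxx big1 ?addn0 // => j /andP[_ ju].
  by rewrite mnm1E eq_sym (negPf ju).
rewrite big1 // => j hj; rewrite mnm1E; case: eqP => // uj.
by move: h; rewrite uj (eqP hj) eqxx.
Qed.

Lemma bhom_XX (u v : 'I_24) :
  bhom (fun i => ((u %/ 6)%N == i : nat) + ((v %/ 6)%N == i : nat))%N ('X_u * 'X_v).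
Proof.
move=> mo; rewrite -mpolyXD msuppX mem_seq1 => /eqP -> i.
by rewrite bdD !bdU.
Qed.

Definition idx (a : 'I_4) (k : nat) : 'I_24 := inord (a * 6 + k).

Lemma idx_div a k : (k < 6)%N -> ((idx a k) %/ 6)%N = a.
Proof.
move=> k6; rewrite /idx inordK; last first.
  by have := ltn_ord a; rewrite -ltnS in k6; lia.
by rewrite divnMDl // divn_small // addn0.
Qed.

Lemma idx_mod a k : (k < 6)%N -> ((idx a k) %% 6)%N = k.
Proof.
move=> k6; rewrite /idx inordK; last first.
  by have := ltn_ord a; lia.
by rewrite modnMDl modn_small.
Qed.

Lemma plucker4_idx Ms a k : (k < 6)%N -> plucker4 Ms (idx a k) = plucker (Ms a) (inord k).
Proof. by move=> k6; rewrite /plucker4 idx_div // idx_mod // inord_val. Qed.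

Lemma bhom_ext d1 d2 p : d1 =1 d2 -> bhom d1 p -> bhom d2 p.
Proof. by move=> e h mo hm i; rewrite -e; exact: h. Qed.

Definition dd (a b : 'I_4) := fun i : 'I_4 => ((a == i) : nat) + ((b == i) : nat).

Lemma bhom_opp d p : bhom d p -> bhom d (- p).
Proof. by move=> h mo; rewrite (perm_mem (msuppN p)); exact: h. Qed.

Lemma bhom_XXi (a b : 'I_4) k l : (k < 6)%N -> (l < 6)%N ->
  bhom (dd a b) ('X_(idx a k) * 'X_(idx b l)).
Proof.
move=> k6 l6; apply: bhom_ext (bhom_XX _ _) => i /=.
by rewrite !idx_div.
Qed.

Definition G (a b : 'I_4) : {mpoly CC[24]} :=
  'X_(idx a 0) * 'X_(idx b 5) - 'X_(idx a 1) * 'X_(idx b 4)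
  + 'X_(idx a 2) * 'X_(idx b 3) + 'X_(idx a 3) * 'X_(idx b 2)
  - 'X_(idx a 4) * 'X_(idx b 1) + 'X_(idx a 5) * 'X_(idx b 0).

Lemma bhom_G (a b : 'I_4) : bhom (dd a b) (G a b).
Proof.
rewrite /G; repeat (apply: bhom_add || apply: bhom_sub || apply: bhom_opp); by apply: bhom_XXi.
Qed.

Lemma G_eval (a b : 'I_4) Ms : (G a b).@[plucker4 Ms] = pairing (plucker (Ms a)) (plucker (Ms b)).
Proof.
rewrite /G !(mevalD, mevalN, mevalM, mevalXU) !plucker4_idx // /pairing; ring.
Qed.

Lemma pairing_inv (M N : 'M[CC]_(2,4)) (g : 'M[CC]_4) :
  pairing (plucker (M *m g)) (plucker (N *m g)) = pairing (plucker M) (plucker N) * \det g.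
Proof.
rewrite -!det_pairing -det_mulmx.
congr (\det _).
by rewrite -mul_col_mx.
Qed.

Lemma semistable_of_pairs (xs : 'I_4 -> 'rV[CC]_4) (a b c d : 'I_4) :
  (forall i, dd a b i + dd c d i = 1)%N ->
  (forall i, xs i != 0) ->
  ~~ (hplane (xs a) == hplane (xs b))%MS -> ~~ (hplane (xs c) == hplane (xs d))%MS ->
  semistable_P1H xs.
Proof.
move=> hd nz nab ncd.
exists 1%N, (G a b * G c d); split => //; split; [|split].
- move=> mo hm i; rewrite -[RHS](hd i).
  exact: (bhom_mul _ _ _ _ (bhom_G a b) (bhom_G c d) mo hm i).
- move=> g dg Ms _.
  by rewrite !mevalM !G_eval !pairing_inv dg !mulr1.
- rewrite mevalM !G_eval -!det_pairing mulf_neq0 //.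
  + by apply/negP => /eqP /(det_hplane_eq0 _ _ (nz a) (nz b)); apply/negP.
  + by apply/negP => /eqP /(det_hplane_eq0 _ _ (nz c) (nz d)); apply/negP.
Qed.

Definition blk (j : 'I_24) : 'I_4 := inord (j %/ 6).

Lemma blkE (j : 'I_24) (i : 'I_4) : (blk j == i) = ((j %/ 6)%N == i).
Proof.
rewrite /blk -val_eqE /= inordK //.
by have := ltn_ord j; lia.
Qed.

Lemma meval_scale m (F : {mpoly CC[24]}) (s : 'I_4 -> CC) (v : 'I_24 -> CC) :
  multihom m F ->
  F.@[fun j => s (blk j) * v j] = (\prod_i s i) ^+ m * F.@[v].
Proof.
move=> hF; rewrite !mevalE big_distrr /=; apply: eq_big_seq => mo hm.
rewrite mulrCA; congr (_ * _).
under eq_bigr do rewrite exprMn.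
rewrite big_split /=; congr (_ * _).
rewrite (partition_big blk predT) //= -prodrXl.
apply: eq_bigr => i _.
transitivity (\prod_(j < 24 | blk j == i) s i ^+ mo j).
  by apply: eq_bigr => j /eqP ->.
rewrite prodrXr; congr (_ ^+ _).
rewrite -(hF mo hm i); apply: eq_bigl => j; exact: blkE.
Qed.

Lemma poly_vanish (P : {poly CC}) (c : CC) (e : nat) : (0 < e)%N ->
  (forall t : CC, t != 0 -> c = t ^+ e * P.[t]) -> c = 0.
Proof.
move=> e0 H.
pose Hp := 'X^e * P - c%:P.
have rt : forall t : CC, t != 0 -> root Hp t.
  move=> t nt; rewrite /root /Hp hornerD hornerN hornerM hornerXn hornerC -H //.
  by rewrite subrr.
have H0 : Hp = 0.
  apply/eqP/negPn/negP => nH.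
  pose rs := [seq (n.+1)%:R : CC | n <- iota 0 (size Hp)].
  have := @max_poly_roots _ Hp rs nH.
  have -> : all (root Hp) rs.
    apply/allP => z /mapP [n _ ->]; apply: rt; by rewrite pnatr_eq0.
  have -> : uniq rs.
    rewrite map_inj_uniq ?iota_uniq // => a b /eqP; rewrite eqr_nat => /eqP [].
    done.
  by rewrite size_map size_iota ltnn => /(_ isT) /(_ isT).
have := congr1 (fun p : {poly CC} => p`_0) H0.
rewrite /Hp coefB coefXnM e0 coefC eqxx coef0 sub0r => /eqP.
by rewrite oppr_eq0 => /eqP.
Qed.

Definition Dm (R : fieldType) (t : R) : 'M[R]_4 :=
  diag_mx (\row_(j < 4) if (j < 2)%N then t else t^-1).
Arguments Dm {R} t.
Definition E1 (R : fieldType) : 'M[R]_4 := diag_mx (\row_(j < 4) if (j < 2)%N then 1 else 0).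
Definition E2 (R : fieldType) : 'M[R]_4 := diag_mx (\row_(j < 4) if (j < 2)%N then 0 else 1).

Lemma det_Dm (R : fieldType) (t : R) : t != 0 -> \det (Dm t) = 1.
Proof.
move=> nt; rewrite det_diag !big_ord_recl big_ord0 !mxE /=.
by field.
Qed.

Lemma pid_Dm (R : fieldType) (t : R) : (pid_mx 2 : 'M[R]_(2,4)) *m Dm t = t *: pid_mx 2.
Proof.
apply/matrixP => i j; rewrite mul_mx_diag !mxE.
case: i j => [[|[|i]] Hi] [[|[|[|[|j]]] Hj]] //=; rewrite ?mulr0 ?mul0r ?mul1r ?mulr1 //.
Qed.

Lemma Dm_split (R : fieldType) (t : R) : Dm t = t *: E1 R + t^-1 *: E2 R.
Proof.
apply/matrixP => i j; rewrite !mxE.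
case: i j => [[|[|[|[|i]]]] Hi] [[|[|[|[|j]]]] Hj] //=; rewrite ?mulr0n ?mulr1n ?mulr0 ?mulr1 ?addr0 ?add0r //.
Qed.

Lemma plucker_scale (t : CC) (A : 'M[CC]_(2,4)) l : plucker (t *: A) l = t ^+ 2 * plucker A l.
Proof. rewrite /plucker !mxE; ring. Qed.

Definition mix (A1 A2 : 'M[CC]_(2,4)) (k : 'I_6) : CC :=
  let a : 'I_4 := inord (plpair k).1 in
  let b : 'I_4 := inord (plpair k).2 in
  A1 0 a * A2 1 b + A2 0 a * A1 1 b - A1 0 b * A2 1 a - A2 0 b * A1 1 a.

Lemma plucker_mix (t : CC) (A1 A2 : 'M[CC]_(2,4)) l : t != 0 ->
  t ^+ 2 * plucker (t *: A1 + t^-1 *: A2) l =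
  t ^+ 4 * plucker A1 l + t ^+ 2 * mix A1 A2 l + plucker A2 l.
Proof. move=> nt; rewrite /plucker /mix !mxE; by field. Qed.

Definition Pk (A1 A2 : 'M[CC]_(2,4)) (l : 'I_6) : {poly CC} :=
  (plucker A1 l)%:P * 'X^4 + (mix A1 A2 l)%:P * 'X^2 + (plucker A2 l)%:P.

Lemma Pk_eval A1 A2 l t : (Pk A1 A2 l).[t] = t ^+ 4 * plucker A1 l + t ^+ 2 * mix A1 A2 l + plucker A2 l.
Proof. rewrite /Pk !hornerD !hornerCM !hornerXn hornerC; ring. Qed.

Lemma get_k (xs : 'I_4 -> 'rV[CC]_4) i : (2 < multiplicity xs i)%N ->
  exists k : 'I_4, forall j, j != k -> (hplane (xs j) <= hplane (xs i))%MS.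
Proof.
rewrite /multiplicity; set S := [set j | _] => hS.
have le1 : (#|~: S| <= 1)%N.
  by have := cardsC S; rewrite card_ord; lia.
case: (set_0Vmem (~: S)) => [S0 | [k kS]].
  exists i => j _.
  have : j \in S by apply/negPn/negP => jS; rewrite -in_setC S0 in_set0 in jS.
  by rewrite inE => /andP[].
exists k => j jk.
have : j \in S.
  apply/negPn/negP => jS; rewrite -in_setC in jS.
  have := (card_le1P le1) k kS j; rewrite jS /= => /esym/eqP jk'.
  by rewrite jk' eqxx in jk.
by rewrite inE => /andP[].
Qed.

Lemma split_mul (R : comRingType) m n (X : 'M[R]_(m,n)) (Y Z W : 'M[R]_n) (a b : R) :
  X *m (a *: Y + b *: Z) *m W = a *: (X *m Y *m W) + b *: (X *m Z *m W).
Proof. by rewrite mulmxDr mulmxDl -!scalemxAr -!scalemxAl. Qed.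

Lemma unstable (xs : 'I_4 -> 'rV[CC]_4) i : (forall j, xs j != 0) ->
  (2 < multiplicity xs i)%N -> ~ semistable_P1H xs.
Proof.
move=> nz hm [m [F [m0 [hF [inv nzF]]]]].
have [k hk] := get_k xs i hm.
pose Ms := fun j => hplane (xs j).
have rk : forall j, \rank (Ms j) = 2%N by move=> j; exact: rank_hplane.
pose M := Ms i; pose U := row_ebase M; pose L := col_ebase M.
have eM : M = L *m pid_mx 2 *m U by move: (mulmx_ebase M); rewrite (rk i).
have Uu : U \in unitmx := row_ebase_unit M.
pose g t := invmx U *m Dm t *m U.
have detg : forall t, t != 0 -> \det (g t) = 1.
  move=> t nt; rewrite /g !det_mulmx det_inv det_Dm // mulr1 mulVf //.
have gS : forall t j, j != k -> Ms j *m g t = t *: Ms j.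
  move=> t j jk; have /submxP [K eK] := hk j jk.
  have eM' : hplane (xs i) = L *m pid_mx 2 *m U := eM.
  rewrite /Ms eK eM' /g !mulmxA mulmxK //.
  by rewrite -(mulmxA _ (pid_mx 2)) pid_Dm -!scalemxAr -!scalemxAl.
pose A1 := Ms k *m invmx U *m E1 CC *m U.
pose A2 := Ms k *m invmx U *m E2 CC *m U.
have gk : forall t, Ms k *m g t = t *: A1 + t^-1 *: A2.
  by move=> t; rewrite /g Dm_split !mulmxA split_mul.
pose s (t : CC) (b : 'I_4) := if b == k then (t ^+ 2)^-1 else t ^+ 2.
pose Pp (r : 'I_24) : {poly CC} :=
  if blk r == k then Pk A1 A2 (inord (r %% 6)) else (plucker4 Ms r)%:P.
pose Gp := \sum_(mo <- msupp F) F@_mo *: \prod_(r < 24) (Pp r) ^+ mo r.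
have key : forall t : CC, t != 0 -> F.@[plucker4 Ms] = t ^+ (4 * m) * Gp.[t].
  move=> t nt.
  rewrite -(inv (g t) (detg t nt) Ms rk).
  have ev : forall r, plucker4 (fun j => Ms j *m g t) r = s t (blk r) * (Pp r).[t].
    move=> r; change (plucker (Ms (blk r) *m g t) (inord (r %% 6)) = s t (blk r) * (Pp r).[t]).
    rewrite /s /Pp; case: eqP => [->|/eqP bk].
    - by rewrite gk Pk_eval -plucker_mix // mulrA mulVf ?mul1r // expf_neq0.
    - by rewrite gS // plucker_scale hornerC.
  rewrite (meval_eq F ev).
  rewrite (meval_scale m F (s t) (fun r => (Pp r).[t]) hF).
  have ps : \prod_i s t i = t ^+ 4.
    rewrite (bigD1 k) //= /s eqxx.
    rewrite (eq_bigr (fun _ => t ^+ 2)) => [|j /negPf ->] //.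
    rewrite prodr_const cardC1 card_ord /=.
    by field; rewrite ?expf_neq0.
  rewrite ps -exprM; congr (_ * _).
  rewrite mevalE /Gp horner_sum; apply: eq_bigr => mo _.
  rewrite hornerZ horner_prod; congr (_ * _); apply: eq_bigr => r _.
  by rewrite horner_exp.
have := poly_vanish Gp (F.@[plucker4 Ms]) (4 * m) _ key.
rewrite muln_gt0 m0 => /(_ isT) => h0.
by move: nzF; rewrite -/Ms h0 eqxx.
Qed.

Lemma triple (xs : 'I_4 -> 'rV[CC]_4) (p q r : 'I_4) :
  p != q -> q != r -> r != p ->
  (hplane (xs q) == hplane (xs p))%MS -> (hplane (xs r) == hplane (xs p))%MS ->
  (2 < multiplicity xs p)%N.
Proof.
move=> pq qr rp eq er; apply/card_gt2P; exists p, q, r; split; last by split.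
by split; rewrite inE // !submx_refl.
Qed.

Lemma inord_neq (a b : nat) : (a < 4)%N -> (b < 4)%N -> a != b ->
  (inord a : 'I_4) != inord b.
Proof. by move=> a4 b4 ab; rewrite -val_eqE /= !inordK. Qed.

Theorem main_thm (xs : 'I_4 -> 'rV[CC]_4) :
  (forall i, xs i != 0) ->
  (semistable_P1H xs <-> forall i : 'I_4, (multiplicity xs i <= 2)%N).
Proof.
move=> nz; split.
  move=> ss i; rewrite leqNgt; apply/negP => h; exact: (unstable xs i nz h ss).
move=> hle.
pose o (n : nat) : 'I_4 := inord n.
pose Eq p q := (hplane (xs (o p)) == hplane (xs (o q)))%MS.
have Es : forall p q, Eq p q -> Eq q p by move=> p q; rewrite /Eq andbC.
have tri : forall p q r, (p < 4)%N -> (q < 4)%N -> (r < 4)%N ->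
    p != q -> q != r -> r != p -> Eq q p -> Eq r p -> False.
  move=> p q r p4 q4 r4 pq qr rp eq er.
  have := triple xs (o p) (o q) (o r) (inord_neq _ _ p4 q4 pq) (inord_neq _ _ q4 r4 qr)
     (inord_neq _ _ r4 p4 rp) eq er.
  by rewrite ltnNge hle.
case: (boolP (Eq 0 1 || Eq 2 3)%N) => h1; last first.
  move: h1; rewrite negb_or => /andP[n1 n2].
  apply: (semistable_of_pairs xs (o 0) (o 1) (o 2) (o 3)) => //.
  by apply: ord4P; rewrite /dd /o -!val_eqE /= !inordK.
case: (boolP (Eq 0 2 || Eq 1 3)%N) => h2; last first.
  move: h2; rewrite negb_or => /andP[n1 n2].
  apply: (semistable_of_pairs xs (o 0) (o 2) (o 1) (o 3)) => //.
  by apply: ord4P; rewrite /dd /o -!val_eqE /= !inordK.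
exfalso.
case/orP: h1 => [e01|e23]; case/orP: h2 => [e02|e13].
- exact: (tri 0 1 2)%N (Es _ _ e01) (Es _ _ e02).
- exact: (tri 1 0 3)%N e01 (Es _ _ e13).
- exact: (tri 2 3 0)%N (Es _ _ e23) e02.
- exact: (tri 3 2 1)%N e23 e13.
Qed.


Theorem proposition5p7 (xs : 'I_4 -> 'rV[CC]_4) :
  (forall i, xs i != 0) ->
  (semistable_P1H xs <-> forall i : 'I_4, (multiplicity xs i <= 2)%N).
Proof. exact: main_thm. Qed.
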